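(* Let $N\ge 1$, let $G:\mathbb{R}_{\ge 0}\to\mathbb{R}_{\ge 0}$ be strictly convex and increasing with $G(0)=0$, and let $w_0,\dots,w_{N-1}>0$ be known demands. Consider the problem $$\min_{u\in\mathbb{R}_{\ge 0}^N}\ \sum_{k=0}^{N-1}G(u_k)\quad\text{s.t.}\quad \sum_{j=0}^{k}u_j\ \ge\ \sum_{j=0}^{k}w_j\quad\text{for all }k\in\{0,\dots,N-1\}.$$ (Equivalently: minimize $\sum_k G(u_k)$ subject to $x_0=0$, $x_{k+1}=x_k+u_k-w_k$, $x_k\ge 0$ for $k=1,\dots,N$.) Then $u^*=\mathrm{LS}(w_0,\dots,w_{N-1})$ is the optimal solution of this problem. Moreover, the optimal trajectory is non-increasing: $u^*_{k+1}\le u^*_k$ for all $k\in\{0,\dots,N-2\}$.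
   Context: Block-averaging (load shifting) procedure $\mathrm{LS}$: given a finite sequence $v=(v_0,\dots,v_{N-1})$ of positive reals, define indices $0=k_0<k_1<\dots<k_n=N$ recursively: if $k_l<N$, let $k_{l+1}=k_l+j^*$, where $j^*$ is the largest element of $\arg\max_{j\in\{1,\dots,N-k_l\}}\frac{1}{j}\sum_{i=k_l}^{k_l+j-1}v_i$; stop when $k_n=N$. Then $\mathrm{LS}(v)=(u_0,\dots,u_{N-1})$ with $u_i=\frac{1}{k_{l+1}-k_l}\sum_{m=k_l}^{k_{l+1}-1}v_m$ for all $k_l\le i<k_{l+1}$, $l=0,\dots,n-1$. (The paper's $\textsc{LoadShift}(\bm w,0,0)$ is $\mathrm{LS}(w)$.) *)

(* Defs.v *)
From mathcomp Require Import all_boot all_order all_algebra.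
From mathcomp Require Import reals.
Set Implicit Arguments. Unset Strict Implicit. Unset Printing Implicit Defensive.
Import Order.TTheory GRing.Theory Num.Theory.
Local Open Scope ring_scope.

Section LoadShift.
Variable R : realType.

(* average of the first j entries of v (j >= 1 in all uses) *)
Definition avg (v : seq R) (j : nat) : R := (\sum_(i < j) v`_i) / j%:R.

Definition is_argmax (v : seq R) (j : 'I_(size v).+1) : bool :=
  (0 < j)%N && [forall i : 'I_(size v).+1, (0 < i)%N ==> (avg v i <= avg v j)].

Definition best_len (v : seq R) : nat :=
  \max_(j < (size v).+1 | @is_argmax v j) (j : nat).

(* the recursion k_{l+1} = k_l + j^*, applied to the remaining suffix;
   fuel = size v is enough since each step removes j^* >= 1 entries *)
Fixpoint LS_fuel (fuel : nat) (v : seq R) : seq R :=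
  match fuel with
  | 0 => [::]
  | f.+1 =>
      if v is [::] then [::]
      else let j := best_len v in nseq j (avg v j) ++ LS_fuel f (drop j v)
  end.

Definition LS (v : seq R) : seq R := LS_fuel (size v) v.

Definition feasible (N : nat) (w u : seq R) : Prop :=
  size u = N /\ (forall k, (k < N)%N -> 0 <= u`_k) /\
  (forall k, (k < N)%N -> \sum_(j < k.+1) w`_j <= \sum_(j < k.+1) u`_j).

Definition cost (G : R -> R) (N : nat) (u : seq R) : R := \sum_(k < N) G u`_k.

End LoadShift.

(* Main.v *)
Require Import Defs.
From mathcomp Require Import all_boot all_order all_algebra.
From mathcomp Require Import classical_sets reals.
From mathcomp Require Import ring lra zify.
Import Order.TTheory GRing.Theory Num.Theory.
Local Open Scope ring_scope.
Local Open Scope classical_set_scope.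
Set Implicit Arguments. Unset Strict Implicit.

Section SG.
Variable R : realType.
Variable G : R -> R.
Hypothesis G0 : G 0 = 0.
Hypothesis Gpos : forall x, 0 <= x -> 0 <= G x.
Hypothesis Gconv : forall x y t, 0 <= x -> 0 <= y -> x != y -> 0 < t -> t < 1 ->
     G (t * x + (1 - t) * y) < t * G x + (1 - t) * G y.

Definition slope (x a : R) := (G a - G x) / (a - x).

Lemma three_chord x a y : 0 <= x -> x < a -> a < y -> slope x a <= slope a y.
Proof.
move=> x0 xa ay.
have yx : 0 < y - x by lra.
pose t := (y - a) / (y - x).
have ht : a = t * x + (1 - t) * y.
  rewrite /t; field; lra.
have t0 : 0 < t by rewrite /t divr_gt0 //; lra.
have t1 : t < 1 by rewrite /t ltr_pdivrMr //; lra.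
have xy : x != y by rewrite lt_eqF // (lt_trans xa ay).
have := @Gconv x y t x0 (ltW (le_lt_trans x0 (lt_trans xa ay))) xy t0 t1.
rewrite -ht => H.
have H2 : G a * (y - x) <= G x * (y - a) + G y * (a - x).
  have -> : G x * (y - a) + G y * (a - x) = (t * G x + (1 - t) * G y) * (y - x).
    rewrite /t; field; lra.
  by rewrite ler_pM2r // ltW.
rewrite /slope ler_pdivrMr; last lra.
rewrite mulrAC ler_pdivlMr; last lra.
nra.
Qed.

Definition sg (a : R) := sup [set slope x a | x in [set x | 0 <= x < a]].

Lemma sg_ub a y : 0 < a -> a < y -> sg a <= slope a y.
Proof.
move=> a0 ay; apply: ge_sup.
  by exists (slope 0 a); exists 0 => //=; rewrite lexx a0.
move=> z [x /= /andP[x0 xa] <-]; exact: three_chord.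
Qed.

Lemma sg_has a y : 0 < a -> a < y -> has_sup [set slope x a | x in [set x | 0 <= x < a]].
Proof.
move=> a0 ay; split.
  by exists (slope 0 a); exists 0 => //=; rewrite lexx a0.
exists (slope a y) => z [x /= /andP[x0 xa] <-]; exact: three_chord.
Qed.

Lemma sg_lb a x : 0 <= x -> x < a -> slope x a <= sg a.
Proof.
move=> x0 xa; have a0 : 0 < a by apply: le_lt_trans xa.
have a1 : a < a + 1 by rewrite ltrDl.
have := sup_upper_bound (sg_has a0 a1); apply.
by exists x => //=; rewrite x0 xa.
Qed.

Lemma sg_ge0 a : 0 < a -> 0 <= sg a.
Proof.
move=> a0; apply: le_trans (sg_lb (lexx 0) a0).
by rewrite /slope G0 !subr0 divr_ge0 // ?Gpos ?ltW.
Qed.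

Lemma sg_mono a b : 0 < a -> a <= b -> sg a <= sg b.
Proof.
move=> a0 ab0; have [-> // | ab1] := eqVneq a b.
have ab : a < b by rewrite lt_neqAle ab1 ab0.
apply: le_trans (sg_ub a0 ab) _; exact: sg_lb (ltW a0) ab.
Qed.

Lemma sg_tangent a y : 0 < a -> 0 <= y -> G a + sg a * (y - a) <= G y.
Proof.
move=> a0 y0; case: (ltgtP y a) => [ya|ay|->]; last by rewrite subrr mulr0 addr0.
- have := sg_lb y0 ya; rewrite /slope ler_pdivrMr; last lra.
  move=> H; nra.
- have := sg_ub a0 ay; rewrite /slope ler_pdivlMr; last lra.
  move=> H; nra.
Qed.
End SG.
Section LSP.
Variable R : realType.
Implicit Types (v s : seq R).

Definition psum v k : R := \sum_(i < k) v`_i.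

Lemma psumS v k : psum v k.+1 = psum v k + v`_k.
Proof. by rewrite /psum big_ord_recr. Qed.

Lemma psum0 v : psum v 0 = 0.
Proof. by rewrite /psum big_ord0. Qed.

Lemma psum_catl (s1 s2 : seq R) k : (k <= size s1)%N -> psum (s1 ++ s2) k = psum s1 k.
Proof.
elim: k => [|k IH] Hk; first by rewrite !psum0.
by rewrite !psumS IH ?(ltnW Hk) // nth_cat Hk.
Qed.

Lemma psum_catr (s1 s2 : seq R) k : psum (s1 ++ s2) (size s1 + k) = psum s1 (size s1) + psum s2 k.
Proof.
elim: k => [|k IH]; first by rewrite addn0 psum0 addr0 psum_catl.
by rewrite addnS !psumS IH nth_cat ltnNge leq_addr /= addKn addrA.
Qed.

Lemma psum_drop v j k : psum v (j + k) = psum v j + psum (drop j v) k.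
Proof.
elim: k => [|k IH]; first by rewrite addn0 psum0 addr0.
by rewrite addnS !psumS IH nth_drop addrA.
Qed.

Lemma psum_nseq j (a : R) k : (k <= j)%N -> psum (nseq j a) k = k%:R * a.
Proof.
elim: k => [|k IH] Hk; first by rewrite psum0 mul0r.
by rewrite psumS IH ?(ltnW Hk) // nth_nseq Hk mulrSr mulrDl mul1r.
Qed.

Lemma avgE v j : avg v j = psum v j / j%:R.
Proof. by []. Qed.

Lemma exists_max (f : nat -> R) n : (0 < n)%N ->
  exists i, [/\ (0 < i)%N, (i <= n)%N & forall k, (0 < k)%N -> (k <= n)%N -> f k <= f i].
Proof.
elim: n => [//|n IH] _.
case: n IH => [|n] IH.
  exists 1%N; split => // k k0 k1; have -> : k = 1%N by lia. by [].
have [i [i0 iN Hi]] := IH isT.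
case: (lerP (f n.+2) (f i)) => H.
  exists i; split => //; first lia.
  move=> k k0 k1; case: (ltngtP k n.+2) => Hk; last by rewrite Hk.
    by apply: Hi => //; lia.
  lia.
exists n.+2; split => // k k0 k1; case: (ltngtP k n.+2) => Hk; last by rewrite Hk.
  by apply: le_trans (ltW H); apply: Hi => //; lia.
lia.
Qed.

Lemma best_len_spec v : v != [::] ->
  [/\ (0 < best_len v)%N, (best_len v <= size v)%N,
    forall i, (0 < i)%N -> (i <= size v)%N -> avg v i <= avg v (best_len v) &
    forall i, (best_len v < i)%N -> (i <= size v)%N -> avg v i < avg v (best_len v)].
Proof.
move=> vn.
have sv : (0 < size v)%N by case: v vn.
have [i0 [i00 i0n Hi0]] := exists_max (avg v) sv.
have i0n' : (i0 < (size v).+1)%N by [].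
have Hi0' : @is_argmax R v (Ordinal i0n').
  apply/andP; split => //; apply/forallP => i; apply/implyP => ipos.
  by apply: Hi0 => //; rewrite -ltnS; exact: ltn_ord.
have Hbl : forall i : 'I_(size v).+1, @is_argmax R v i -> (i <= best_len v)%N.
  by move=> i Pi; rewrite /best_len; apply: (bigop.leq_bigmax_cond i Pi).
rewrite /best_len (bigop.bigmax_eq_arg (Ordinal i0n')) //.
case: arg_maxnP => //= j /andP[j0 /forallP Pj] maxj.
have Pj' : forall i, (0 < i)%N -> (i <= size v)%N -> avg v i <= avg v j.
  move=> i i1 i2; have i2' : (i < (size v).+1)%N by [].
  by have := Pj (Ordinal i2'); rewrite /= i1.
split => //; first by rewrite -ltnS; exact: ltn_ord.
move=> i ji iv.
have iv' : (i < (size v).+1)%N by [].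
have : ~~ @is_argmax R v (Ordinal iv').
  apply/negP => /Hbl /= H.
  have := H; rewrite /best_len (bigop.bigmax_eq_arg (Ordinal i0n')) //.
  case: arg_maxnP => //= j' Pj'' maxj'.
  have := maxj j' Pj''; lia.
rewrite /is_argmax /= negb_and (leq_trans _ ji) //= => /forallPn [k].
rewrite negb_imply => /andP[k0]; rewrite -ltNge => Hk.
apply: lt_le_trans Hk _; apply: Pj' => //; rewrite -ltnS; exact: ltn_ord.
Qed.

Lemma psum_gt0 v k : (0 < k)%N -> (k <= size v)%N ->
  (forall i, (i < size v)%N -> 0 < v`_i) -> 0 < psum v k.
Proof.
move=> + + vp; elim: k => [//|k IH] _ Hk.
rewrite psumS; case: k IH Hk => [|k] IH Hk.
  by rewrite psum0 add0r vp.
by rewrite addr_gt0 ?IH ?vp // ltnW.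
Qed.

Definition LSprops (v u : seq R) :=
 [/\ size u = size v,
     forall k, (k < size v)%N -> 0 < u`_k,
     forall k, (k.+1 < size v)%N -> u`_k.+1 <= u`_k,
     forall k, (k <= size v)%N -> psum v k <= psum u k &
     forall k, (k <= size v)%N -> (k = size v \/ (0 < k)%N /\ u`_k != u`_k.-1) ->
        psum v k = psum u k ].

Lemma LS_head f v : v != [::] -> (LS_fuel f.+1 v)`_0 = avg v (best_len v).
Proof.
case: v => // x v _ /=; set j := best_len _.
have [j0 _ _ _] := best_len_spec (v:=x :: v) isT.
by rewrite nth_cat size_nseq -/j j0 nth_nseq j0.
Qed.

Lemma LS_fuel_props f v : (size v <= f)%N -> (forall k, (k < size v)%N -> 0 < v`_k) ->
  LSprops v (LS_fuel f v).
Proof.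
elim: f v => [|f IH] v.
  rewrite leqn0 => /nilP -> _; split => //= k; rewrite leqn0 => /eqP -> //.
have [-> _ _|vn sv vp] := eqVneq v [::].
  split => //= k; rewrite leqn0 => /eqP -> //.
have E0 : forall v : seq R, v != [::] -> LS_fuel f.+1 v =
  nseq (best_len v) (avg v (best_len v)) ++ LS_fuel f (drop (best_len v) v) by case.
have E := E0 v vn.
have [j0 jv Hle Hlt] := best_len_spec vn.
set j := best_len v in j0 jv Hle Hlt.
set a := avg v j in Hle Hlt.
set vd := drop j v.
set r := LS_fuel f vd.
rewrite E.
have svd : size vd = (size v - j)%N by rewrite size_drop.
have vdp : forall k, (k < size vd)%N -> 0 < vd`_k.
  by move=> k; rewrite svd nth_drop => Hk; apply: vp; lia.
have [IH1 IH2 IH3 IH4 IH5] := IH vd (ltac:(rewrite svd; lia)) vdp.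
have Pj : psum v j = j%:R * a.
  by rewrite /a avgE mulrC divfK // pnatr_eq0 -lt0n.
have a0 : 0 < a by rewrite /a avgE divr_gt0 ?ltr0n // psum_gt0.
have nthu : forall k, (nseq j a ++ r)`_k = if (k < j)%N then a else r`_(k - j).
  by move=> k; rewrite nth_cat size_nseq; case: ifP => // h; rewrite nth_nseq h.
have psl : forall k, (k <= j)%N -> psum (nseq j a ++ r) k = k%:R * a.
  by move=> k hk; rewrite psum_catl ?size_nseq // psum_nseq.
have psr : forall m, psum (nseq j a ++ r) (j + m) = j%:R * a + psum r m.
  by move=> m; have := psum_catr (nseq j a) r m; rewrite size_nseq psum_nseq.
split.
- by rewrite size_cat size_nseq IH1 svd; lia.
- move=> k Hk; rewrite nthu; case: ifP => // /negbT; rewrite -leqNgt => jk.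
  by apply: IH2; rewrite svd; lia.
- move=> k Hk; rewrite !nthu.
  case: (ltnP k.+1 j) => h1; first by rewrite (ltnW h1).
  case: (ltnP k j) => h2.
    have -> : (k.+1 - j = 0)%N by lia.
    have vdn : vd != [::] by apply/eqP => h; move: svd; rewrite h /=; lia.
    have svf : (size vd <= f)%N by rewrite svd; lia.
    have [f' ef] : exists f', f = f'.+1.
      by case: (f) svf => [|f'' _]; [rewrite leqn0 size_eq0 (negbTE vdn) | exists f''].
    rewrite /r ef LS_head //.
    have [j0' jv' _ _] := best_len_spec vdn.
    set j' := best_len vd in j0' jv'.
    have := Hlt (j + j')%N ltac:(lia) ltac:(rewrite svd in jv'; lia).
    rewrite !avgE psum_drop -/vd Pj -/a natrD.
    have jp : (0 : R) < j%:R by rewrite ltr0n.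
    have jp' : (0 : R) < j'%:R by rewrite ltr0n.
    rewrite ltr_pdivrMr; last by rewrite addr_gt0.
    move=> H; rewrite ler_pdivrMr //; apply: ltW; nra.
  have -> : (k.+1 - j = (k - j).+1)%N by lia.
  by apply: IH3; rewrite svd; lia.
- move=> k Hk; case: (leqP k j) => h.
    rewrite psl //; case: k Hk h => [|k] Hk h; first by rewrite !psum0 mul0r.
    have := Hle k.+1 isT Hk; rewrite avgE ler_pdivrMr ?ltr0n //.
    by rewrite mulrC.
  have -> : k = (j + (k - j))%N by lia.
  rewrite psr psum_drop Pj lerD2l; apply: IH4; rewrite svd; lia.
- move=> k Hk Hc; case: (ltngtP k j) => h.
  + case: Hc => [Hc|[k0]]; first lia.
    by rewrite !nthu h (ltn_trans _ h) ?eqxx // prednK // ltnSn.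
  + have -> : k = (j + (k - j))%N by lia.
    rewrite psr psum_drop Pj; congr (_ + _); apply: IH5; first by rewrite svd; lia.
    case: Hc => [Hc|[k0]]; first by left; rewrite svd; lia.
    rewrite !nthu ltnNge (ltnW h) /=.
    case: (ltnP (k.-1) j) => h2.
      lia.
    right; split; first lia.
    by have -> : ((k - j).-1 = k.-1 - j)%N by lia.
  + by rewrite h Pj psl.
Qed.
End LSP.

Lemma abel (R : realType) (c x : nat -> R) n :
  \sum_(i < n) c i * x i =
  \sum_(i < n) (c i - c i.+1) * (\sum_(j < i.+1) x j) + c n * (\sum_(j < n) x j).
Proof.
elim: n => [|n IH]; first by rewrite !big_ord0 mulr0 addr0.
rewrite big_ord_recr IH /= [in RHS]big_ord_recr /= [\sum_(j < n.+1) x j]big_ord_recr /=.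
ring.
Qed.

Theorem theorem1 (R : realType) (N : nat) (G : R -> R) (w : seq R) :
  (0 < N)%N ->
  size w = N ->
  (forall k, (k < N)%N -> 0 < w`_k) ->
  G 0 = 0 ->
  (forall x, 0 <= x -> 0 <= G x) ->
  (forall x y, 0 <= x -> x < y -> G x < G y) ->
  (forall x y t, 0 <= x -> 0 <= y -> x != y -> 0 < t -> t < 1 ->
     G (t * x + (1 - t) * y) < t * G x + (1 - t) * G y) ->
  let us := LS w in
  [/\ feasible N w us,
      (forall u, feasible N w u -> cost G N us <= cost G N u),
      (forall u, feasible N w u -> cost G N u <= cost G N us -> u = us)
    & (forall k, (k.+1 < N)%N -> us`_k.+1 <= us`_k)].
Proof.
move=> N0 sw wp G0 Gpos Ginc Gconv us.
have wp' : forall k, (k < size w)%N -> 0 < w`_k by rewrite sw.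
have [P1 P2 P3 P4 P5] := LS_fuel_props (leqnn (size w)) wp'.
rewrite -/(LS w) -/us sw in P1 P2 P3 P4 P5.
have Feas : feasible N w us.
  split; first by []. split => [k Hk|k Hk]; first exact: ltW (P2 k Hk).
  exact: P4 k.+1 Hk.
have Opt : forall u, feasible N w u -> cost G N us <= cost G N u.
  move=> u [su [up uf]].
  pose c i := if (i < N)%N then sg G us`_i else 0.
  rewrite -subr_ge0 /cost -sumrB.
  apply: (@le_trans _ _ (\sum_(i < N) c i * (u`_i - us`_i))).
    rewrite (abel c (fun i => u`_i - us`_i)) /c ltnn mul0r addr0; apply: sumr_ge0 => i _.
    rewrite ltn_ord; set D := \sum_(j < i.+1) _.
    have DE : D = psum u i.+1 - psum us i.+1 by rewrite /D sumrB.
    case: (ltnP i.+1 N) => hi.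
      have [e|ne] := eqVneq us`_i.+1 us`_i; first by rewrite e subrr mul0r.
      apply: mulr_ge0.
        rewrite subr_ge0; apply: sg_mono => //; [exact: P2 | exact: P3].
      rewrite DE -(P5 i.+1 (ltnW hi)); last by right; split.
      by rewrite subr_ge0; apply: uf.
    have iN : i.+1 = N by have := ltn_ord i; lia.
    rewrite subr0; apply: mulr_ge0; first by apply: sg_ge0 => //; exact: P2.
    rewrite DE -(P5 i.+1 _ (or_introl iN)); last by rewrite iN.
    by rewrite subr_ge0 iN; have := uf N.-1; rewrite prednK //; apply.
  apply: ler_sum => i _; rewrite /c ltn_ord.
  have := sg_tangent Gconv (P2 i (ltn_ord i)) (up i (ltn_ord i)); lra.
split => //.
move=> u Fu Cu; have [su [up uf]] := Fu.
  idtac.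
  apply: (@eq_from_nth _ 0); first by rewrite su P1.
  move=> k; rewrite su => Hk; apply/eqP; apply/negPn/negP => Hne.
  pose v := mkseq (fun i => (u`_i + us`_i) / 2) N.
  have nv : forall i, (i < N)%N -> v`_i = (u`_i + us`_i) / 2.
    by move=> i Hi; rewrite nth_mkseq.
  have Fv : feasible N w v.
    split; first by rewrite size_mkseq.
    split.
      move=> i Hi; rewrite nv // divr_ge0 // addr_ge0 ?up //; exact: ltW (P2 i Hi).
    move=> i Hi.
    have -> : \sum_(j < i.+1) v`_j = (\sum_(j < i.+1) u`_j + \sum_(j < i.+1) us`_j) / 2.
      rewrite -big_split /= big_distrl /=; apply: eq_bigr => j _; rewrite nv //.
      by apply: leq_trans (ltn_ord j) _.
    have := uf i Hi; have := P4 i.+1 Hi; rewrite /psum; lra.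
  have half : forall x y, 0 <= x -> 0 <= y ->
      G ((x + y) / 2) <= (G x + G y) / 2 /\ (x != y -> G ((x + y) / 2) < (G x + G y) / 2).
    move=> x y x0 y0.
    have E1 : (x + y) / 2 = 1/2 * x + (1 - 1/2) * y by field.
    have E2 : (G x + G y) / 2 = 1/2 * G x + (1 - 1/2) * G y by field.
    have lt1 : forall nxy : x != y, G ((x + y) / 2) < (G x + G y) / 2.
      move=> nxy; rewrite E1 E2; apply: Gconv => //; lra.
    split => //; have [->|nxy] := eqVneq x y; last exact: ltW (lt1 nxy).
    have -> : (y + y) / 2 = y by field.
    have -> : (G y + G y) / 2 = G y by field.
    by [].
  have := Opt v Fv.
  have Hlt : cost G N v < (cost G N u + cost G N us) / 2.
    rewrite /cost -big_split big_distrl /=.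
    rewrite (bigD1 (Ordinal Hk)) //= [X in _ < X](bigD1 (Ordinal Hk)) //=.
    have u0 : forall i, (i < N)%N -> 0 <= u`_i by [].
    have us0 : forall i, (i < N)%N -> 0 <= us`_i by move=> i Hi; exact: ltW (P2 i Hi).
    apply: ltr_leD.
      by rewrite nv //; apply: (half _ _ (u0 _ Hk) (us0 _ Hk)).2.
    apply: ler_sum => i _; rewrite nv //.
    exact: (half _ _ (u0 _ (ltn_ord i)) (us0 _ (ltn_ord i))).1.
  lra.
Qed.
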